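(* Weak sd-stability does not imply claimwise stability: there exist a set $N$ of $n$ agents and a set $O$ of $n$ objects with strict preferences $\succ_i$ over $O$ and strict priorities $\succ_o$ over $N$, and a random matching $p$ that is weakly sd-stable but not claimwise stable.
   Context: A random matching is an $n\times n$ bistochastic matrix $p=[p(i,o)]$; it is deterministic if entries are in $\{0,1\}$. $p$ is claimwise stable if for each $(i,o)\in N\times O$ and each $j\in N$ with $i\succ_o j$, $\sum_{o':o'\succ_i o}p(i,o')\ge p(j,o)$. For agent $i$ with $o_1\succ_i\dots\succ_i o_n$, $p(i)\succsim_i^{sd}q(i)$ if $\sum_{l=1}^k p(i,o_l)\ge\sum_{l=1}^k q(i,o_l)$ for all $k$, and $p(i)\succ_i^{sd}q(i)$ if additionally $p(i)\neq q(i)$; for object $o$ with $i_1\succ_o\dots\succ_o i_n$, $p(o)\succsim_o^{sd}q(o)$ if $\sum_{l=1}^k p(i_l,o)\ge\sum_{l=1}^k q(i_l,o)$ for all $k$, and $p(o)\succ_o^{sd}q(o)$ if additionally $p(o)\neq q(o)$. $p$ is strongly sd-blocked by $(i,o)$ if there is a deterministic matching $q\ne p$ with $q(i,o)=1$, $q(i)\succ_i^{sd}p(i)$ and $q(o)\succ_o^{sd}p(o)$. $p$ is weakly sd-stable if no pair $(i,o)$ strongly sd-blocks $p$. *)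

(* Defs.v *)
From mathcomp Require Import all_boot all_order all_algebra all_fingroup.
From mathcomp Require Export reals.
Set Implicit Arguments. Unset Strict Implicit. Unset Printing Implicit Defensive.
Import Order.TTheory GRing.Theory Num.Theory.
Local Open Scope ring_scope.

(* A strict preference of agent i over objects is encoded by a bijective
   ranking  pref i : {perm 'I_n}  (pref i o = position of o in i's list,
   0 = best):  o >_i o'  iff  pref i o < pref i o'.
   Likewise a strict priority of object o over agents:  prio o : {perm 'I_n},
   i >_o j iff prio o i < prio o j.
   A random matching p : 'M[R]_n has p i o = probability that agent i gets o. *)

Section Defs.
Variable R : numDomainType.
Variable n : nat.
Implicit Types (p q : 'M[R]_n) (pref prio : 'I_n -> {perm 'I_n}).

Definition prefers_obj pref (i : 'I_n) (o o' : 'I_n) : bool :=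
  (pref i o < pref i o')%N.
Definition prefers_agent prio (o : 'I_n) (i j : 'I_n) : bool :=
  (prio o i < prio o j)%N.

Definition bistochastic p : Prop :=
  [/\ forall i o, 0 <= p i o,
      forall i, \sum_(o < n) p i o = 1
    & forall o, \sum_(i < n) p i o = 1].

Definition random_matching p : Prop := bistochastic p.

Definition deterministic p : Prop :=
  bistochastic p /\ forall i o, p i o = 0 \/ p i o = 1.

Definition claimwise_stable pref prio p : Prop :=
  forall (i o j : 'I_n), prefers_agent prio o i j ->
    p j o <= \sum_(o' < n | prefers_obj pref i o' o) p i o'.

Definition sd_agent_ge pref (i : 'I_n) p q : Prop :=
  forall k : nat,
    \sum_(o < n | (pref i o < k)%N) q i o <= \sum_(o < n | (pref i o < k)%N) p i o.
Definition sd_agent_gt pref (i : 'I_n) p q : Prop :=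
  sd_agent_ge pref i p q /\ exists o, p i o != q i o.

Definition sd_obj_ge prio (o : 'I_n) p q : Prop :=
  forall k : nat,
    \sum_(i < n | (prio o i < k)%N) q i o <= \sum_(i < n | (prio o i < k)%N) p i o.
Definition sd_obj_gt prio (o : 'I_n) p q : Prop :=
  sd_obj_ge prio o p q /\ exists i, p i o != q i o.

Definition strongly_sd_blocks pref prio p (i o : 'I_n) : Prop :=
  exists q, [/\ deterministic q, q != p, q i o = 1,
               sd_agent_gt pref i q p & sd_obj_gt prio o q p].

Definition weakly_sd_stable pref prio p : Prop :=
  forall i o : 'I_n, ~ strongly_sd_blocks pref prio p i o.
End Defs.

(* Main.v *)
Require Import Defs.
From mathcomp Require Import all_boot all_order all_algebra all_fingroup.
From mathcomp Require Import reals.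
Set Implicit Arguments. Unset Strict Implicit. Unset Printing Implicit Defensive.
Import Order.TTheory GRing.Theory Num.Theory.
Local Open Scope ring_scope.

Section Gen.
Variable R : numDomainType.
Variable n : nat.

Lemma row_rest (q : 'M[R]_n) i o : bistochastic q -> q i o = 1 ->
  forall o', o' != o -> q i o' = 0.
Proof.
case=> q0 qr _ qio o' ne.
have := qr i; rewrite (bigD1 o) //= qio => /(congr1 (fun x => x - 1)); rewrite addrC addrK subrr.
move=> /psumr_eq0P H; apply: H => //; move=> x _; exact: q0.
Qed.

Lemma col_rest (q : 'M[R]_n) i o : bistochastic q -> q i o = 1 ->
  forall i', i' != i -> q i' o = 0.
Proof.
case=> q0 _ qc qio i' ne.
have := qc o; rewrite (bigD1 i) //= qio => /(congr1 (fun x => x - 1)); rewrite addrC addrK subrr.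
move=> /psumr_eq0P H; apply: H => //; move=> x _; exact: q0.
Qed.

Lemma blocks_facts pref prio (p : 'M[R]_n) i o : bistochastic p ->
  strongly_sd_blocks pref prio p i o ->
  [/\ p i o != 1,
      forall o', (pref i o' < pref i o)%N -> p i o' = 0
    & forall j, (prio o j < prio o i)%N -> p j o = 0].
Proof.
move=> bp [q [[bq _] _ qio [ga [o1 ne1]] [gb _]]].
have [p0 _ _] := bp.
split.
- apply/negP => /eqP pio; move/negP: ne1; apply; apply/eqP.
  have [->|ne] := eqVneq o1 o; first by rewrite pio qio.
  by rewrite (row_rest bq qio ne) (row_rest bp pio ne).
- have le := ga (pref i o).
  rewrite [X in _ <= X]big1 in le; last first.
    move=> x lt; apply: (row_rest bq qio); apply/eqP => ex.
    by move: lt; rewrite ex ltnn.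
  have: \sum_(o0 < n | (pref i o0 < pref i o)%N) p i o0 = 0.
    by apply/eqP; rewrite eq_le le sumr_ge0.
  move/psumr_eq0P => H o' lt; apply: H => //; move=> x _; exact: p0.
- have le := gb (prio o i).
  rewrite [X in _ <= X]big1 in le; last first.
    move=> x lt; apply: (col_rest bq qio); apply/eqP => ex.
    by move: lt; rewrite ex ltnn.
  have: \sum_(i0 < n | (prio o i0 < prio o i)%N) p i0 o = 0.
    by apply/eqP; rewrite eq_le le sumr_ge0.
  move/psumr_eq0P => H o' lt; apply: H => //; move=> x _; exact: p0.
Qed.
End Gen.

Definition cmN (i o : nat) : nat :=
  nth 0 (nth [::] [:: [:: 0; 1; 1]; [:: 2; 0; 0]; [:: 0; 1; 1]] i) o.
Definition cm (i o : 'I_3) : nat := cmN i o.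
Definition pm (R : numFieldType) : 'M[R]_3 := \matrix_(i, o) ((cm i o)%:R / 2).
Definition prefF (i : 'I_3) : {perm 'I_3} :=
  if val i == 0%N then perm (@ordS_inj 3) else 1%g.
Definition prioF (o : 'I_3) : {perm 'I_3} :=
  if val o == 2%N then perm (@ordS_inj 3) else 1%g.
Definition prnN (i o : nat) : nat := if i == 0%N then (o.+1 %% 3)%N else o.
Definition pinN (o i : nat) : nat := if o == 2%N then (i.+1 %% 3)%N else i.

Lemma prefE (i o : 'I_3) : (prefF i o : nat) = prnN i o.
Proof. by rewrite /prefF /prnN; case: eqP => _; rewrite ?permE ?perm1. Qed.
Lemma prioE (o i : 'I_3) : (prioF o i : nat) = pinN o i.
Proof. by rewrite /prioF /pinN; case: eqP => _; rewrite ?permE ?perm1. Qed.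

Lemma key : all (fun i => all (fun o =>
   [|| cmN i o == 2%N,
       has (fun o' => (prnN i o' < prnN i o)%N && (cmN i o' != 0%N)) (iota 0 3)
     | has (fun j => (pinN o j < pinN o i)%N && (cmN j o != 0%N)) (iota 0 3)])
   (iota 0 3)) (iota 0 3).
Proof. by vm_compute. Qed.

Lemma mem_iota3 (i : 'I_3) : (val i \in iota 0 3).
Proof. by rewrite mem_iota /= ltn_ord. Qed.

Lemma pmE (R : numFieldType) i o : pm R i o = (cm i o)%:R / 2.
Proof. by rewrite mxE. Qed.

Lemma pm_eq0 (R : numFieldType) i o : (pm R i o == 0) = (cm i o == 0%N).
Proof. by rewrite pmE mulf_eq0 invr_eq0 !pnatr_eq0 orbF. Qed.

Lemma pm_eq1 (R : numFieldType) i o : (pm R i o == 1) = (cm i o == 2%N).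
Proof.
rewrite pmE; have h2 : (2%:R : R) != 0 by rewrite pnatr_eq0.
apply/eqP/eqP => [h|->]; last exact: divff.
have := congr1 (fun x => x * 2%:R) h; rewrite /= mulfVK // mul1r.
by move/eqP; rewrite eqr_nat => /eqP.
Qed.

Lemma pm_bist (R : numFieldType) : bistochastic (pm R).
Proof.
have h2 : (2%:R : R) != 0 by rewrite pnatr_eq0.
split.
- by move=> i o; rewrite pmE divr_ge0 ?ler0n.
- move=> i; under eq_bigr do rewrite pmE.
  rewrite -mulr_suml -natr_sum.
  have -> : (\sum_(o < 3) cm i o)%N = 2%N.
    by rewrite !big_ord_recr big_ord0 /=; case: i => [[|[|[|]]]].
  exact: divff.
- move=> o; under eq_bigr do rewrite pmE.
  rewrite -mulr_suml -natr_sum.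
  have -> : (\sum_(i < 3) cm i o)%N = 2%N.
    by rewrite !big_ord_recr big_ord0 /=; case: o => [[|[|[|]]]].
  exact: divff.
Qed.

Theorem proposition34 (R : realType) :
  exists (n : nat) (pref prio : 'I_n -> {perm 'I_n}) (p : 'M[R]_n),
    [/\ random_matching p, weakly_sd_stable pref prio p
      & ~ claimwise_stable pref prio p].
Proof.
exists 3%N, prefF, prioF, (pm R); split.
- exact: pm_bist.
- move=> i o /(blocks_facts (pm_bist R)) [h1 h2 h3].
  move/allP: key => /(_ _ (mem_iota3 i)) /allP /(_ _ (mem_iota3 o)) /or3P [].
  + by rewrite -(pm_eq1 R) (negbTE h1).
  + case/hasP => x; rewrite mem_iota /= => xlt /andP [lt nz].
    move: nz; rewrite -[x]/(val (Ordinal xlt)) -/(cm _ _).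
    by rewrite -(pm_eq0 R) h2 ?eqxx // !prefE.
  + case/hasP => x; rewrite mem_iota /= => xlt /andP [lt nz].
    move: nz; rewrite -[x]/(val (Ordinal xlt)) -/(cm _ _).
    by rewrite -(pm_eq0 R) h3 ?eqxx // !prioE.
- move=> H.
  have := H ord0 ord0 (Ordinal (isT : (1 < 3)%N)).
  rewrite /prefers_agent !prioE /=.
  move=> /(_ isT).
  rewrite big_mkcond !big_ord_recr big_ord0 /= /prefers_obj !prefE /= !pmE /cm /= add0r addr0.
  rewrite /cmN /= add0r ler_pdivrMr ?ltr0n // divfK ?pnatr_eq0 //.
  by rewrite ler_nat.
Qed.
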